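(* For $n\ge 3$, the commutator subgroup $[B_n,B_n]$ is densely ordered by the (restriction of the) Dehornoy ordering; i.e. it has no least positive element, equivalently for any $f<g$ in $[B_n,B_n]$ there is $h\in[B_n,B_n]$ with $f<h<g$.
   Context: $B_n$ is the Artin braid group with generators $\sigma_1,\dots,\sigma_{n-1}$. A word in the generators is $i$-positive if it contains only $\sigma_1,\dots,\sigma_i$ and their inverses, $\sigma_i$ occurs, and every occurrence of $\sigma_i$ has positive exponent; a braid is $i$-positive if some representative word is. The Dehornoy ordering is the left-invariant total order on $B_n$ whose positive cone consists of all braids that are $i$-positive for some $i$. *)

(* Defs.v *)
From mathcomp Require Import all_boot.
From Stdlib Require Import Relations.
Set Implicit Arguments. Unset Strict Implicit. Unset Printing Implicit Defensive.

(* A letter of B_n: (k, e) with k : 'I_n.-1 stands for sigma_(k+1)^(+1) if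
   e = true and sigma_(k+1)^(-1) if e = false. *)
Definition bletter (n : nat) := ('I_n.-1 * bool)%type.
Definition bword (n : nat) := seq (bletter n).

Inductive braid_step (n : nat) : bword n -> bword n -> Prop :=
| bs_free (u v : bword n) (a : 'I_n.-1) (e : bool) :
    braid_step (u ++ [:: (a, e); (a, ~~ e)] ++ v) (u ++ v)
| bs_far (u v : bword n) (a b : 'I_n.-1) :
    (a.+1 < b)%N ->
    braid_step (u ++ [:: (a, true); (b, true)] ++ v) (u ++ [:: (b, true); (a, true)] ++ v)
| bs_braid (u v : bword n) (a b : 'I_n.-1) :
    nat_of_ord b = (nat_of_ord a).+1 ->
    braid_step (u ++ [:: (a, true); (b, true); (a, true)] ++ v)
               (u ++ [:: (b, true); (a, true); (b, true)] ++ v).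

Definition braid_eq (n : nat) : relation (bword n) :=
  clos_refl_sym_trans (bword n) (@braid_step n).

Definition binv (n : nat) (w : bword n) : bword n :=
  rev (map (fun l : bletter n => (l.1, ~~ l.2)) w).

(* i-positive word (i = k+1): only sigma_1..sigma_(k+1)^{+-1} occur,
   sigma_(k+1) occurs, and only with positive exponent. *)
Definition ipositive_word (n : nat) (k : 'I_n.-1) (w : bword n) : Prop :=
  (forall l, l \in w -> (nat_of_ord l.1 <= k)%N) /\
  (k, true) \in w /\ (k, false) \notin w.

Definition dehornoy_pos (n : nat) (w : bword n) : Prop :=
  exists w' : bword n, braid_eq w w' /\ exists k : 'I_n.-1, ipositive_word k w'.

Definition dehornoy_lt (n : nat) (f g : bword n) : Prop :=
  dehornoy_pos (binv f ++ g).

Definition bcomm (n : nat) (a b : bword n) : bword n :=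
  binv a ++ binv b ++ a ++ b.

Definition in_commutator_subgroup (n : nat) (w : bword n) : Prop :=
  exists ps : seq (bword n * bword n),
    braid_eq w (flatten (map (fun p => bcomm p.1 p.2) ps)).

(* Main.v *)
Require Import Defs.
From Stdlib Require Import Relations Setoid Morphisms Lia.
From mathcomp Require Import all_boot zify.
Set Implicit Arguments. Unset Strict Implicit. Unset Printing Implicit Defensive.

Section B.
Variable n : nat.
Local Notation W := (bword n).
Local Notation BE := (@braid_eq n).

Lemma be_refl (a : W) : BE a a. Proof. exact: rst_refl. Qed.
Lemma be_sym (a b : W) : BE a b -> BE b a. Proof. exact: rst_sym. Qed.
Lemma be_trans (a b c : W) : BE a b -> BE b c -> BE a c. Proof. exact: rst_trans. Qed.

Lemma catctx (x y u v L : W) : x ++ (u ++ L ++ v) ++ y = (x ++ u) ++ L ++ (v ++ y).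
Proof. by rewrite !catA. Qed.

Lemma be_ctx (x y a b : W) : BE a b -> BE (x ++ a ++ y) (x ++ b ++ y).
Proof.
elim=> [a' b' st| a'|a' b' _ IH|a' b' c' _ IH1 _ IH2].
- apply: rst_step; case: st => [u v c e|u v c d H|u v c d H].
  + have -> : x ++ (u ++ v) ++ y = (x ++ u) ++ (v ++ y) by rewrite !catA.
    by rewrite catctx; apply: bs_free.
  + by rewrite !catctx; apply: bs_far.
  + by rewrite !catctx; apply: bs_braid.
- exact: rst_refl.
- exact: rst_sym.
- exact: rst_trans IH2.
Qed.

Lemma be_catl (x a b : W) : BE a b -> BE (x ++ a) (x ++ b).
Proof. by move=> H; have := be_ctx x [::] H; rewrite !cats0. Qed.
Lemma be_catr (y a b : W) : BE a b -> BE (a ++ y) (b ++ y).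
Proof. by move=> H; have := be_ctx [::] y H. Qed.
Lemma be_cat (a a' b b' : W) : BE a a' -> BE b b' -> BE (a ++ b) (a' ++ b').
Proof. move=> H1 H2; apply: be_trans (be_catr _ H1) (be_catl _ H2). Qed.

Lemma binv_cat (a b : W) : binv (a ++ b) = binv b ++ binv a.
Proof. by rewrite /binv map_cat rev_cat. Qed.
Lemma binvK (a : W) : binv (binv a) = a.
Proof. rewrite /binv map_rev revK -map_comp map_id_in // => -[x e] _ /=; by rewrite negbK. Qed.
Lemma binv_cons (l : bletter n) (a : W) : binv (l :: a) = binv a ++ [:: (l.1, ~~ l.2)].
Proof. by rewrite -cat1s binv_cat. Qed.

Lemma cancel_l (u z : W) : BE (binv u ++ (u ++ z)) z.
Proof.
elim: u z => [|[c e] u IH] z /=; first exact: be_refl.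
rewrite binv_cons -catA /=.
apply: be_trans (IH z).
have := @bs_free n (binv u) (u ++ z) c (~~ e); rewrite negbK => H.
by apply: rst_step.
Qed.
Lemma cancel_r (u z : W) : BE (u ++ (binv u ++ z)) z.
Proof. by have := cancel_l (binv u) z; rewrite binvK. Qed.

Definition P (w : W) := count (fun l : bletter n => l.2) w.
Definition N (w : W) := count (fun l : bletter n => ~~ l.2) w.

Lemma PN_inv (a b : W) : BE a b -> P a + N b = P b + N a.
Proof.
rewrite /P /N; elim=> [a' b' st| a'|a' b' _ IH|a' b' c' _ IH1 _ IH2]; try lia.
case: st => [u v c e|u v c d H|u v c d H]; rewrite !count_cat /=; try lia.
Qed.

Lemma P_binv (a : W) : P (binv a) = N a.
Proof. by rewrite /P /binv count_rev count_map. Qed.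
Lemma N_binv (a : W) : N (binv a) = P a.
Proof. rewrite /N /binv count_rev count_map; apply: eq_count => l /=; exact: negbK. Qed.

Lemma P_cat (a b : W) : P (a ++ b) = P a + P b. Proof. exact: count_cat. Qed.
Lemma N_cat (a b : W) : N (a ++ b) = N a + N b. Proof. exact: count_cat. Qed.

Lemma comm_PN (f : W) : in_commutator_subgroup f -> P f = N f.
Proof.
case=> ps /PN_inv.
have -> : P (flatten [seq bcomm p.1 p.2 | p <- ps]) = N (flatten [seq bcomm p.1 p.2 | p <- ps]).
  elim: ps => [|p ps IH] //; have -> : flatten [seq bcomm p0.1 p0.2 | p0 <- p :: ps] = bcomm p.1 p.2 ++ flatten [seq bcomm p0.1 p0.2 | p0 <- ps] by [].
  rewrite !P_cat !N_cat IH !P_binv !N_binv; lia.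
lia.
Qed.


Lemma be_step_ctx (x y L L' : W) : braid_step L L' -> BE (x ++ L ++ y) (x ++ L' ++ y).
Proof. by move=> H; apply: be_ctx; apply: rst_step. Qed.

Lemma free_ctx (x y : W) c e : BE (x ++ [:: (c, e); (c, ~~ e)] ++ y) (x ++ y).
Proof. exact: rst_step (bs_free _ _ _ _). Qed.

Lemma D1 (a b : 'I_n.-1) : nat_of_ord b = (nat_of_ord a).+1 ->
  BE [:: (b, false); (a, true); (b, true)] [:: (a, true); (b, true); (a, false)].
Proof.
move=> hab.
have H1 : BE [:: (b, false); (a, true); (b, true); (a, true); (a, false)]
             [:: (b, false); (a, true); (b, true)].
  by have := free_ctx [:: (b, false); (a, true); (b, true)] [::] a true; rewrite cats0.
have H2 : BE [:: (b, false); (a, true); (b, true); (a, true); (a, false)]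
             [:: (b, false); (b, true); (a, true); (b, true); (a, false)]
  := be_step_ctx [:: (b, false)] [:: (a, false)] (bs_braid [::] [::] hab).
have H3 : BE [:: (b, false); (b, true); (a, true); (b, true); (a, false)]
             [:: (a, true); (b, true); (a, false)]
  := free_ctx [::] [:: (a, true); (b, true); (a, false)] b false.
exact: be_trans (be_sym H1) (be_trans H2 H3).
Qed.

Lemma D2 (a b : 'I_n.-1) : nat_of_ord b = (nat_of_ord a).+1 ->
  BE [:: (a, false); (a, true); (b, true); (a, true); (b, false); (a, false)]
     [:: (a, false); (b, true)].
Proof.
move=> hab.
have H1 : BE [:: (a, false); (a, true); (b, true); (a, true); (b, false); (a, false)]
             [:: (a, false); (b, true); (a, true); (b, true); (b, false); (a, false)]
  := be_step_ctx [:: (a, false)] [:: (b, false); (a, false)] (bs_braid [::] [::] hab).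
have H2 : BE [:: (a, false); (b, true); (a, true); (b, true); (b, false); (a, false)]
             [:: (a, false); (b, true); (a, true); (a, false)]
  := free_ctx [:: (a, false); (b, true); (a, true)] [:: (a, false)] b true.
have H3 : BE [:: (a, false); (b, true); (a, true); (a, false)] [:: (a, false); (b, true)].
  by have := free_ctx [:: (a, false); (b, true)] [::] a true; rewrite cats0.
exact: be_trans H1 (be_trans H2 H3).
Qed.

End B.

#[global] Instance be_Equiv n : Equivalence (@braid_eq n).
Proof. split; [exact: be_refl | exact: be_sym | exact: be_trans]. Qed.
#[global] Instance cat_Proper n :
  Proper (@braid_eq n ==> @braid_eq n ==> @braid_eq n) (@cat (bletter n)).
Proof. move=> a a' Ha b b' Hb; exact: be_cat. Qed.

Lemma split_first (T : eqType) (x : T) (w : seq T) :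
  x \in w -> exists u v, w = u ++ x :: v /\ x \notin u.
Proof.
elim: w => [//|y w IH]; rewrite in_cons; case: (eqVneq x y) => [<- _|nxy /= Hw].
  by exists [::], w.
have [u [v [-> Hu]]] := IH Hw.
by exists (y :: u), v; rewrite in_cons negb_or nxy Hu.
Qed.

Lemma mem_binv n (u : bword n) l :
  l \in binv u -> exists2 l0, l0 \in u & l = (l0.1, ~~ l0.2).
Proof. by rewrite /binv mem_rev => /mapP. Qed.
Theorem proposition3p1 (n : nat) : (3 <= n)%N ->
  forall f g : bword n,
    in_commutator_subgroup f -> in_commutator_subgroup g ->
    dehornoy_lt f g ->
    exists h : bword n,
      in_commutator_subgroup h /\ dehornoy_lt f h /\ dehornoy_lt h g.
Proof.
move=> _ f g Hf Hg [w [Hw [k [Hle [Hin Hnotin]]]]].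
have kpos : (0 < k)%N.
  case: (posnP k) => // k0; exfalso.
  have PNw : P w = N w.
    have := PN_inv Hw; rewrite P_cat N_cat P_binv N_binv (comm_PN Hf) (comm_PN Hg); lia.
  have N0 : N w = 0.
    apply/eqP; rewrite -leqn0 leqNgt -has_count; apply/hasPn => -[c e] Hl /=.
    case: e Hl => // Hl; exfalso.
    have ck : c = k by apply/val_inj; have := Hle _ Hl; rewrite /= k0; lia.
    by move: Hnotin; rewrite -ck Hl.
  have P1 : (0 < P w)%N by rewrite /P -has_count; apply/hasP; exists (k, true).
  lia.
pose a : 'I_n.-1 := Ordinal (leq_ltn_trans (leq_pred k) (ltn_ord k)).
have hab : nat_of_ord k = (nat_of_ord a).+1 by rewrite /= prednK.
have [u [v [Ew Hu]]] := split_first Hin.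
have lowu : forall l, l \in u -> (nat_of_ord l.1 < k)%N.
  move=> [c e] Hl /=.
  have Hw' : (c, e) \in w by rewrite Ew mem_cat Hl.
  have := Hle _ Hw'; rewrite leq_eqVlt => /orP [/eqP E|//]; exfalso.
  have ck : c = k := val_inj E; clear E.
  case: e Hl Hw' => Hl Hw'; first by move: Hu; rewrite -ck Hl.
  by move: Hnotin; rewrite -ck Hw'.
have lowbu : forall l, l \in binv u -> (nat_of_ord l.1 < k)%N.
  by move=> l /mem_binv [l0 /lowu H ->].
pose q := u ++ [:: (a, false); (k, true)] ++ binv u.
pose x := u ++ [:: (a, true)] ++ binv u.
pose y := u ++ [:: (k, false); (a, false)] ++ binv u.
have bx : binv x = u ++ [:: (a, false)] ++ binv u by rewrite /x !binv_cat binvK -catA.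
have bby : binv y = u ++ [:: (a, true); (k, true)] ++ binv u by rewrite /y !binv_cat binvK -catA.
have bq : binv q = u ++ [:: (k, false); (a, true)] ++ binv u by rewrite /q !binv_cat binvK -catA.
have Hq : braid_eq (bcomm x y) q.
  rewrite /bcomm bx bby -!catA !cancel_l /x /y /q /=.
  exact (be_ctx u (binv u) (D2 hab)).
have qpos : ipositive_word k q.
  split; [|split].
  - move=> l; rewrite /q !mem_cat !in_cons in_nil orbF => /or3P [/lowu/ltnW //|/orP [/eqP ->|/eqP ->] /=|/lowbu/ltnW //].
      by rewrite hab.
    by [].
  - by rewrite /q !(mem_cat, inE, eqxx, orbT).
  - rewrite /q !mem_cat !in_cons in_nil orbF; apply/negP => /or3P [/lowu|/orP [/eqP []|/eqP []]|/lowbu] /=.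
    + by rewrite ltnn.
    + by move/(congr1 val) => /=; rewrite hab; lia.
    + by [].
    + by rewrite ltnn.
exists (f ++ q); split; [|split].
- case: Hf => ps Hps; exists (ps ++ [:: (x, y)]).
  rewrite map_cat flatten_cat /= cats0.
  rewrite Hps Hq; reflexivity.
- exists q; split; first exact: cancel_l.
  by exists k.
- exists (u ++ [:: (a, true); (k, true); (a, false)] ++ v); split.
  + rewrite binv_cat -catA Hw Ew bq -!catA cancel_l /=.
    exact (be_ctx u v (D1 hab)).
  + exists k; split; [|split].
    * move=> l; rewrite !mem_cat => /orP [/lowu/ltnW //|/orP [|Hv]]; last first.
        by apply: Hle; rewrite Ew mem_cat in_cons Hv !orbT.
      rewrite !in_cons in_nil orbF => /or3P [/eqP ->|/eqP ->|/eqP ->] /=; by rewrite ?hab.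
    * by rewrite !(mem_cat, inE, eqxx, orbT).
    * rewrite !mem_cat; apply/negP => /orP [/lowu|/orP [|Hv]].
      - by rewrite ltnn.
      - rewrite !in_cons in_nil orbF => /or3P [] /eqP [].
        all: try (move=> _; discriminate). all: try discriminate.
        by move/(congr1 val) => /=; lia.
      - by move: Hnotin; rewrite Ew mem_cat in_cons Hv !orbT.
Qed.
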